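(* Consider the binary CA-RRM with affine indices $s_f(A)=\alpha_f+\beta_f^\top\psi(A)$, $f\in\mathcal F$, normalized by $(\alpha_{f_0},\beta_{f_0})=(0,0)$ for a baseline rule $f_0\in\mathcal F$, and with $p(A)\in(0,1)$ for all menus in the support. Let $d=\dim\psi$. Suppose there exist $d+1$ feature values $x^{(0)},\dots,x^{(d)}\in\mathbb R^d$ such that: (G1) for each $k\in\{0,\dots,d\}$ there exist menus $A_{k1},\dots,A_{kM_k}$ with $\psi(A_{km})=x^{(k)}$ for all $m$, such that the $M_k\times|\mathcal F|$ matrix $H^{(k)}$ with rows $h(A_{k1})^\top,\dots,h(A_{kM_k})^\top$ has rank $|\mathcal F|-1$; (G2) the $(d+1)\times(d+1)$ matrix $X$ whose $k$-th row is $(1,(x^{(k)})^\top)$ has full rank $d+1$. Then the parameter vector $\{(\alpha_f,\beta_f)\}_{f\in\mathcal F}$ is globally identified from the population objects $\{p(A),\kappa^L(A),\kappa^R(A),\psi(A)\}$: any two normalized parameter vectors that generate, via the model, the same choice probabilities $p(A_{km})$ at all menus $A_{km}$ coincide.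
   Context: Binary choice setting. $\mathcal F$ is a finite set of rules, menus $A=\{L^1,L^2\}$. Each rule $f$ has deterministic decisive-side indicators $\kappa_f^L(A),\kappa_f^R(A)\in\{0,1\}$ (not both 1), indicating that $f$ is decisive and recommends the left, respectively right, option at $A$; $\mathcal I_L(A)=\{f:\kappa_f^L(A)=1\}$, $\mathcal I_R(A)=\{f:\kappa_f^R(A)=1\}$. $\psi$ maps menus to $\mathbb R^d$. The model specifies the probability of choosing $L^1$ as $$p(A)=\frac{\sum_{f}\kappa_f^L(A)\,\omega_f(\psi(A))}{\sum_{f}(\kappa_f^L(A)+\kappa_f^R(A))\,\omega_f(\psi(A))},\qquad \omega_f(x):=\exp(\alpha_f+\beta_f^\top x),$$ for menus where both $\mathcal I_L(A),\mathcal I_R(A)$ are nonempty. For such menus, $r(A):=p(A)/(1-p(A))$ and $h(A)\in\mathbb R^{|\mathcal F|}$ has entries $h_f(A)=\kappa_f^L(A)-r(A)\kappa_f^R(A)$. The menus $A_{km}$ in (G1) are assumed two-sided. *)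

(* Defs.v *)
From mathcomp Require Import all_boot all_order all_algebra.
From mathcomp Require Import all_classical all_reals all_analysis.
Set Implicit Arguments. Unset Strict Implicit. Unset Printing Implicit Defensive.
Import Order.TTheory GRing.Theory Num.Theory.
Local Open Scope ring_scope.

Section CARRM.
Variables (R : realType) (F : finType) (Menu : Type) (d : nat).

Definition dotv (b x : 'rV[R]_d) : R := \sum_(i < d) b 0 i * x 0 i.

Definition omega (alpha : F -> R) (beta : F -> 'rV[R]_d) (f : F) (x : 'rV[R]_d) : R :=
  expR (alpha f + dotv (beta f) x).

Definition model_p (kL kR : F -> Menu -> bool) (psi : Menu -> 'rV[R]_d)
  (alpha : F -> R) (beta : F -> 'rV[R]_d) (A : Menu) : R :=
  (\sum_(f : F) (kL f A)%:R * omega alpha beta f (psi A)) /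
  (\sum_(f : F) ((kL f A)%:R + (kR f A)%:R) * omega alpha beta f (psi A)).

Definition two_sided (kL kR : F -> Menu -> bool) (A : Menu) : Prop :=
  (exists f, kL f A) /\ (exists f, kR f A).

Definition odds (p : Menu -> R) (A : Menu) : R := p A / (1 - p A).

Definition hvec (kL kR : F -> Menu -> bool) (p : Menu -> R) (A : Menu) (f : F) : R :=
  (kL f A)%:R - odds p A * (kR f A)%:R.

Definition Hmat (kL kR : F -> Menu -> bool) (p : Menu -> R) (M : nat)
  (Am : 'I_M -> Menu) : 'M[R]_(M, #|F|) :=
  \matrix_(m < M, j < #|F|) hvec kL kR p (Am m) (enum_val j).

Definition Xmat (x : 'I_d.+1 -> 'rV[R]_d) : 'M[R]_(d.+1, 1 + d) :=
  \matrix_(k < d.+1) row_mx (1 : 'rV[R]_1) (x k).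

End CARRM.

(* Main.v *)
Require Import Defs.
From mathcomp Require Import all_boot all_order all_algebra.
From mathcomp Require Import all_classical all_reals all_analysis.
Import Order.TTheory GRing.Theory Num.Theory.
From mathcomp Require Import zify ring.
Local Open Scope ring_scope.
Lemma ker1 (K : fieldType) n m (H : 'M[K]_(m, n)) (u v : 'rV_n) j0 :
  \rank H = (n - 1)%N -> u *m H^T = 0 -> v *m H^T = 0 ->
  u 0 j0 = 1 -> v 0 j0 = 1 -> u = v.
Proof.
move=> rH uH vH u1 v1.
have n0 : (0 < n)%N := leq_ltn_trans (leq0n _) (ltn_ord j0).
have rK : \rank (kermx H^T) = 1%N by rewrite mxrank_ker mxrank_tr rH; lia.
have vn0 : v != 0 by apply/eqP=> v0; move: v1; rewrite v0 mxE; apply/eqP; rewrite eq_sym oner_neq0.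
have sv : (v <= kermx H^T)%MS by apply/sub_kermxP.
have su : (u <= kermx H^T)%MS by apply/sub_kermxP.
have := (mxrank_leqif_eq sv).2; rewrite rank_rV vn0 rK eqxx => /esym/andP[_ sK].
have /submxP[D uD] := submx_trans su sK.
have e j : u 0 j = D 0 0 * v 0 j by rewrite uD mxE big_ord1.
have D1 : D 0 0 = 1 by move: (e j0); rewrite u1 v1 mulr1.
by apply/rowP => j; rewrite e D1 mul1r.
Qed.

Lemma ker0 (K : fieldType) n m (X : 'M[K]_(m, n)) (c : 'rV_n) :
  \rank X = n -> c *m X^T = 0 -> c = 0.
Proof.
move=> rX cX; have sc : (c <= kermx X^T)%MS by apply/sub_kermxP.
apply/eqP; rewrite -mxrank_eq0 -leqn0.
by rewrite (leq_trans (mxrank_leqif_eq sc).1) // mxrank_ker mxrank_tr rX subnn.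
Qed.

Theorem corollary1 (R : realType) (F : finType) (Menu : Type) (d : nat)
  (f0 : F) (kL kR : F -> Menu -> bool) (psi : Menu -> 'rV[R]_d)
  (p : Menu -> R)
  (x : 'I_d.+1 -> 'rV[R]_d) (M : 'I_d.+1 -> nat)
  (A : forall k : 'I_d.+1, 'I_(M k) -> Menu)
  (alpha1 alpha2 : F -> R) (beta1 beta2 : F -> 'rV[R]_d) :
  (* decisive-side indicators are never both 1 *)
  (forall f B, ~~ (kL f B && kR f B)) ->
  (* the menus A_km are two-sided, have feature value x^(k), and p(A_km) in (0,1) *)
  (forall k m, two_sided kL kR (A k m)) ->
  (forall k m, psi (A k m) = x k) ->
  (forall k m, 0 < p (A k m) < 1) ->
  (* (G1) *)
  (forall k, \rank (Hmat kL kR p (A k)) = (#|F| - 1)%N) ->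
  (* (G2) *)
  \rank (Xmat x) = d.+1 ->
  (* normalization of both parameter vectors *)
  alpha1 f0 = 0 -> beta1 f0 = 0 ->
  alpha2 f0 = 0 -> beta2 f0 = 0 ->
  (* both generate the population choice probabilities at all menus A_km *)
  (forall k m, model_p kL kR psi alpha1 beta1 (A k m) = p (A k m)) ->
  (forall k m, model_p kL kR psi alpha2 beta2 (A k m) = p (A k m)) ->
  forall f, alpha1 f = alpha2 f /\ beta1 f = beta2 f.
Proof.
move=> _ _ hpsi hp hH hX a1 b1 a2 b2 hm1 hm2.
pose w (al : F -> R) (be : F -> 'rV[R]_d) k :=
  \row_(j < #|F|) omega al be (enum_val j) (x k).
have wker al be k : (forall m, model_p kL kR psi al be (A k m) = p (A k m)) ->
    w al be k *m (Hmat kL kR p (A k))^T = 0.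
  move=> hm; apply/rowP => m; rewrite !mxE.
  under eq_bigr => j _ do rewrite !mxE.
  rewrite -(big_enum_val (fun f => omega al be f (x k) * hvec kL kR p (A k m) f)).
  have := hm m; rewrite /model_p /hvec /odds hpsi.
  set SL := \sum_f _. set SR := \sum_(f : F) (kR f (A k m))%:R * omega al be f (x k).
  have -> : \sum_f ((kL f (A k m))%:R + (kR f (A k m))%:R) * omega al be f (x k) = SL + SR.
    by rewrite /SR /SL -big_split /=; apply: eq_bigr => f _; rewrite mulrDl.
  set q := p (A k m) => eq.
  have [q0 q1] : 0 < q /\ q < 1 by apply/andP; exact: hp.
  have S0 : SL + SR != 0.
    by apply/eqP => S0; move: eq; rewrite S0 invr0 mulr0 => q0'; move: q0; rewrite -q0' ltxx.
  have q1' : 1 - q != 0 by rewrite subr_eq0 eq_sym lt_eqF.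
  have eS : SL = q * (SL + SR) by rewrite -eq divfK.
  transitivity (SL - q / (1 - q) * SR).
    rewrite /SL /SR mulr_sumr -sumrB; apply: eq_big => // f.
    by move=> _; ring.
  have -> : SL - q / (1 - q) * SR = (SL - q * (SL + SR)) / (1 - q) by field.
  by rewrite -eS subrr mul0r.
have w1 al be k : al f0 = 0 -> be f0 = 0 -> w al be k 0 (enum_rank f0) = 1.
  move=> ha hb; rewrite mxE enum_rankK /omega /dotv ha hb.
  by rewrite big1 ?addr0 ?expR0 // => i _; rewrite mxE mul0r.
have eqw k : w alpha1 beta1 k = w alpha2 beta2 k.
  apply: (@ker1 _ _ _ _ _ _ (enum_rank f0) (hH k)).
  - exact: wker.
  - exact: wker.
  - exact: w1.
  - exact: w1.
have eqs f k : alpha1 f + dotv (beta1 f) (x k) = alpha2 f + dotv (beta2 f) (x k).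
  move/rowP: (eqw k) => /(_ (enum_rank f)).
  by rewrite !mxE enum_rankK; apply: expR_inj.
move=> f.
pose c : 'rV[R]_(1 + d) := row_mx (\row_(j < 1) (alpha1 f - alpha2 f)) (beta1 f - beta2 f).
have c0 : c = 0.
  apply: (@ker0 _ (1 + d) d.+1 (Xmat x)); first by rewrite hX add1n.
  apply/rowP => k; rewrite !mxE big_split_ord /= big_ord1.
  rewrite /c /Xmat row_mxEl.
  under eq_bigr => i _ do rewrite !mxE (unsplitK (inr i : 'I_1 + 'I_d)).
  rewrite !mxE (unsplitK (inl ord0 : 'I_1 + 'I_d)) !mxE mulr1.
  have := eqs f k; rewrite /dotv => e.
  under eq_bigr => i _ do rewrite !mxE mulrBl.
  rewrite sumrB; apply/eqP; rewrite -subr_eq0 subr0; apply/eqP.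
  by rewrite -[RHS](subrr (alpha2 f + \sum_(i < d) beta2 f 0 i * x k 0 i)) -{1}e; ring.
have /eqP := c0; rewrite row_mx_eq0 => /andP[/eqP ha /eqP hb].
split; last by apply/eqP; rewrite -subr_eq0 hb.
by apply/eqP; rewrite -subr_eq0; move/matrixP: ha => /(_ 0 0); rewrite !mxE => ->.
Qed.
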